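(* Let $\mathsf{Pos}(n)$ be the open cone of $n\times n$ real symmetric positive definite matrices in the space of symmetric matrices. Then $r(\mathsf{Pos}(n))=n$.
   Context: For an open acute convex cone $c$ in a finite-dimensional real vector space, its rank $r(c)$ is the infimum of positive integers $N$ with the property: whenever $v_0,v_1,\dots,v_N\in\overline c-\{0\}$ satisfy $\sum_{i=0}^Nv_i\in c$, there is an index $0\le j\le N$ with $\sum_{0\le i\le N,\,i\ne j}v_i\in c$. Here $\overline{\mathsf{Pos}(n)}$ is the cone of positive semidefinite matrices. *)

(* Defs.v *)
From HB Require Import structures.
From mathcomp Require Import all_boot all_order all_algebra.
From mathcomp Require Import reals.
Set Implicit Arguments. Unset Strict Implicit. Unset Printing Implicit Defensive.
Import Order.TTheory GRing.Theory Num.Theory.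
Local Open Scope ring_scope.

Definition posdef (R : realType) (n : nat) (A : 'M[R]_n) : Prop :=
  A^T = A /\ forall x : 'cV[R]_n, x != 0 -> 0 < (x^T *m A *m x) 0 0.

(* Positive semidefinite real symmetric matrices: the closure of Pos(n). *)
Definition possemidef (R : realType) (n : nat) (A : 'M[R]_n) : Prop :=
  A^T = A /\ forall x : 'cV[R]_n, 0 <= (x^T *m A *m x) 0 0.

Definition rank_property (V : zmodType) (c cl : V -> Prop) (N : nat) : Prop :=
  forall v : 'I_N.+1 -> V,
    (forall i, cl (v i) /\ v i != 0) ->
    c (\sum_(i < N.+1) v i) ->
    exists j : 'I_N.+1, c (\sum_(i < N.+1 | i != j) v i).

Definition cone_rank_is (V : zmodType) (c cl : V -> Prop) (r : nat) : Prop :=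
  (0 < r)%N /\ rank_property c cl r /\
  forall N : nat, (0 < N)%N -> (N < r)%N -> ~ rank_property c cl N.

(* Main.v *)
Require Import Defs.
From mathcomp Require Import all_boot all_order all_algebra.
From mathcomp Require Import reals.
From mathcomp Require Import ring lra.
From Stdlib Require Import Classical ClassicalEpsilon.
Set Implicit Arguments. Unset Strict Implicit. Unset Printing Implicit Defensive.
Import Order.TTheory GRing.Theory Num.Theory.
Local Open Scope ring_scope.

Section Aux.
Variable R : realType.

Definition qf n (A : 'M[R]_n) (x : 'cV[R]_n) : R := (x^T *m A *m x) 0 0.

Lemma qf_sum n I (r : seq I) (P : pred I) (A : I -> 'M[R]_n) x :
  qf (\sum_(i <- r | P i) A i) x = \sum_(i <- r | P i) qf (A i) x.
Proof. by rewrite /qf mulmx_sumr mulmx_suml summxE. Qed.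

Lemma trmx_sum' n I (r : seq I) (P : pred I) (A : I -> 'M[R]_n) :
  (\sum_(i <- r | P i) A i)^T = \sum_(i <- r | P i) (A i)^T.
Proof. by rewrite raddf_sum. Qed.

Lemma entry_row m p (A : 'M[R]_(m, p)) k l : A k l = (row k A) 0 l.
Proof. by rewrite mxE. Qed.

Lemma mul_entry m p q (A : 'M[R]_(m, p)) (B : 'M[R]_(p, q)) k l :
  (A *m B) k l = (row k A *m B) 0 l.
Proof. by rewrite (entry_row (A *m B)) row_mul. Qed.

Lemma addmxE' m p (A B : 'M[R]_(m, p)) i j : (A + B) i j = A i j + B i j.
Proof. by rewrite mxE. Qed.
Lemma scalemxE' m p a (A : 'M[R]_(m, p)) i j : (a *: A) i j = a * A i j.
Proof. by rewrite mxE. Qed.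

Lemma psd_bil n (A : 'M[R]_n) x : possemidef A -> qf A x = 0 ->
  forall y : 'cV[R]_n, (x^T *m A *m y) 0 0 = 0.
Proof.
move=> [sA pA] qx y.
set b := (x^T *m A *m y) 0 0; set a := qf A y.
have sy : (y^T *m A *m x) 0 0 = b.
  have <- : (x^T *m A *m y)^T = y^T *m A *m x.
    by rewrite !trmx_mul trmxK sA mulmxA.
  by rewrite mxE.
have ht : forall t : R, 0 <= 2 * t * b + t ^+ 2 * a.
  move=> t; have := pA (x + t *: y).
  have -> : (x + t *: y)^T = x^T + t *: y^T by apply/matrixP => i j; rewrite !mxE.
  rewrite !mulmxDl !mulmxDr -!scalemxAl -!scalemxAr.
  rewrite !addmxE' !scalemxE'. rewrite -/(qf A x) qx -/(qf A y) -/a -/b sy.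
  move=> h; apply: le_trans h _; rewrite le_eqVlt; apply/orP; left; apply/eqP.
  rewrite /a /qf; ring.
have a0 : 0 <= a by exact: pA.
set u := b / (a + 1).
have hb : b = u * (a + 1) by rewrite /u divfK // gt_eqF // ltr_pwDr.
have := ht (- u); rewrite hb => h.
have u0 : u = 0 by nra.
by rewrite u0 mul0r.
Qed.

End Aux.

Lemma rank_n (R : realType) n : rank_property (@posdef R n) (@possemidef R n) n.
Proof.
move=> v hv hS.
case: (classic (exists j : 'I_n.+1, posdef (\sum_(i < n.+1 | i != j) v i))) => // hno.
exfalso.
have hx : forall j : 'I_n.+1, exists x : 'cV[R]_n,
    x != 0 /\ forall i, i != j -> qf (v i) x = 0.
  move=> j.
  have sym : (\sum_(i < n.+1 | i != j) v i)^T = \sum_(i < n.+1 | i != j) v i.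
    by rewrite trmx_sum'; apply: eq_bigr => i _; case: (hv i) => [[]].
  case: (classic (exists x : 'cV[R]_n, x != 0 /\
      ~ (0 < qf (\sum_(i < n.+1 | i != j) v i) x))) => [[x [nx hq]]|hne];
    last first.
    by exfalso; apply: hno; exists j; split=> // x nx; apply: NNPP => hq;
      apply: hne; exists x.
  exists x; split=> //.
  have ge : forall i, i != j -> 0 <= qf (v i) x.
    by move=> i _; case: (hv i) => [[_ H] _]; apply: H.
  rewrite qf_sum in hq.
  have : \sum_(i < n.+1 | i != j) qf (v i) x == 0.
    by rewrite eq_le (sumr_ge0 _ ge) andbT leNgt; apply/negP.
  by move/eqP/(psumr_eq0P ge).
pose X j := proj1_sig (constructive_indefinite_description _ (hx j)).
have HX : forall j, X j != 0 /\ forall i, i != j -> qf (v i) (X j) = 0.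
  by move=> j; exact: (proj2_sig (constructive_indefinite_description _ (hx j))).
have pos : forall j, 0 < qf (v j) (X j).
  move=> j; have := hS.2 (X j) (HX j).1.
  rewrite -/(qf _ _) qf_sum (bigD1 j) //= big1 ?addr0 //.
  by move=> i; apply: (HX j).2.
pose M := \matrix_(k < n.+1, l < n) X k l 0.
have kerNZ : kermx M != 0.
  apply/negP; rewrite kermx_eq0 => /eqP h.
  by have := rank_leq_col M; rewrite h ltnn.
have [i ci] : exists i, row i (kermx M) != 0.
  apply: NNPP => hne; move/negP: kerNZ; apply; apply/eqP/row_matrixP => i.
  rewrite row0; apply/eqP; apply: NNPP => h; apply: hne; exists i; exact/negP.
set c := row i (kermx M) in ci.
have cM : c *m M = 0 by rewrite /c -row_mul mulmx_ker row0.
have rM : forall k, row k M = (X k)^T by move=> k; apply/rowP => l; rewrite !mxE.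
move/negP: ci; apply; apply/eqP/rowP => j; rewrite [RHS]mxE.
have e : (c *m M *m v j *m X j) 0 0 = c 0 j * qf (v j) (X j).
  rewrite -!mulmxA mxE (bigD1 j) //= big1 ?addr0.
    by rewrite mul_entry rM /qf mulmxA.
  move=> k kj; rewrite mul_entry rM mulmxA.
  rewrite (@psd_bil _ _ (v j) (X k)) ?mulr0 //; first by case: (hv j).
  by apply: (HX k).2; rewrite eq_sym.
move: e; rewrite cM !mul0mx mxE => /esym /eqP.
by rewrite mulf_eq0 (gt_eqF (pos j)) orbF => /eqP.
Qed.

Section Diag.
Variable R : realType.

Lemma qf_diag n (d : 'rV[R]_n) x :
  qf (diag_mx d) x = \sum_k d 0 k * x k 0 ^+ 2.
Proof.
rewrite /qf -mulmxA mul_diag_mx mxE; apply: eq_bigr => k _.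
by rewrite !mxE expr2 mulrCA mulrA.
Qed.

Lemma not_rank (n N : nat) : (0 < N)%N -> (N < n)%N ->
  ~ rank_property (@posdef R n) (@possemidef R n) N.
Proof.
move=> N0 Nn H.
pose g (k : 'I_n) : 'I_N.+1 := Ordinal (leq_ltn_trans (geq_minr k N) (ltnSn N)).
pose d (i : 'I_N.+1) : 'rV[R]_n := \row_k (g k == i)%:R.
pose v i := diag_mx (d i).
have emb : forall i : 'I_N.+1, (i < n)%N.
  by move=> i; apply: leq_ltn_trans Nn; rewrite -ltnS.
have gi : forall i : 'I_N.+1, g (Ordinal (emb i)) = i.
  by move=> i; apply: val_inj => /=; apply/minn_idPl; rewrite -ltnS.
have hv : forall i, possemidef (v i) /\ v i != 0.
  move=> i; split; first split.
  - exact: tr_diag_mx.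
  - move=> x; rewrite -/(qf _ _) qf_diag; apply: sumr_ge0 => k _.
    by rewrite mxE mulr_ge0 ?ler0n ?sqr_ge0.
  apply/eqP => h; have := congr1 (fun A : 'M[R]_n => A (Ordinal (emb i)) (Ordinal (emb i))) h.
  by rewrite /= /v !mxE gi !eqxx /= mulr1n => /eqP; rewrite oner_eq0.
have hsym : forall P : pred 'I_N.+1, (\sum_(i | P i) v i)^T = \sum_(i | P i) v i.
  by move=> P; rewrite trmx_sum'; apply: eq_bigr => i _; exact: tr_diag_mx.
have hS : posdef (\sum_(i < N.+1) v i).
  split; first exact: hsym.
  move=> x nx; rewrite -/(qf _ _) qf_sum.
  under eq_bigr => i _ do rewrite qf_diag.
  rewrite exchange_big /=.
  have e : forall k : 'I_n, \sum_(i < N.+1) d i 0 k * x k 0 ^+ 2 = x k 0 ^+ 2.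
    move=> k; rewrite -mulr_suml (bigD1 (g k)) //= big1 ?addr0 ?mxE ?eqxx ?mul1r //.
    by move=> i ne; rewrite mxE eq_sym (negbTE ne).
  under eq_bigr => k _ do rewrite e.
  have ge : forall k : 'I_n, true -> 0 <= x k 0 ^+ 2 by move=> k _; exact: sqr_ge0.
  rewrite lt_neqAle (sumr_ge0 _ ge) andbT eq_sym; apply/negP => /eqP h.
  move/negP: nx; apply; apply/eqP/matrixP => k l; rewrite (ord1 l) [RHS]mxE.
  by have /eqP := @psumr_eq0P _ _ _ _ ge h k isT; rewrite sqrf_eq0 => /eqP.
have [j [_ hj]] := H v hv hS.
pose j' := Ordinal (emb j).
have nz : delta_mx j' 0 != 0 :> 'cV[R]_n.
  by apply/negP => /eqP /matrixP /(_ j' 0); rewrite !mxE !eqxx /= => /eqP; rewrite oner_eq0.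
have := hj (delta_mx j' 0) nz.
rewrite -/(qf _ _) qf_sum big1 ?ltxx //.
move=> i ne; rewrite qf_diag (bigD1 j') //= big1 ?addr0.
  by rewrite !mxE !eqxx gi eq_sym (negbTE ne) mul0r.
by move=> k kj; rewrite !mxE (negbTE kj) /= expr0n /= mulr0.
Qed.

End Diag.

Theorem propositionC2 (R : realType) (n : nat) (hn : (0 < n)%N) :
  cone_rank_is (@posdef R n) (@possemidef R n) n.
Proof.
split=> //; split; first exact: rank_n.
by move=> N N0 Nn; apply: not_rank.
Qed.
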